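(* For every $n\ge 4$, the triangular graph $T_n$ is not eigensharp; that is, $N(T_n)\ge n$.
   Context: The triangular graph $T_n$ is the line graph of the complete graph $K_n$ (vertices are the 2-subsets of $\{1,\dots,n\}$, adjacent iff they intersect). A $t$-address is a $t$-tuple with entries in $\{0,a,b\}$ (three distinct symbols). An addressing of length $t$ of a connected graph $G$ is an assignment of $t$-addresses to the vertices such that for any two vertices $u,v$, the graph distance $d(u,v)$ equals the number of coordinates in which one of the two addresses equals $a$ and the other equals $b$. $N(G)$ is the minimum such $t$. With $D(G)$ the distance matrix of $G$ and $n_\pm(D(G))$ its numbers of positive/negative eigenvalues, one always has $N(G)\ge\max(n_+(D(G)),n_-(D(G)))$; $G$ is called eigensharp if equality holds. For $n\ge 4$, $D(T_n)$ has spectrum $(n-1)(n-2)$ (multiplicity 1), $2-n$ (multiplicity $n-1$), and $0$ (multiplicity $\binom n2-n$), so $\max(n_+(D(T_n)),n_-(D(T_n)))=n-1$. *)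

(* Defs.v *)
From mathcomp Require Import all_boot.
Set Implicit Arguments. Unset Strict Implicit. Unset Printing Implicit Defensive.

Definition walk_of_len (T : finType) (e : rel T) (x y : T) (k : nat) : Prop :=
  exists p : seq T, [/\ size p = k, path e x p & last x p = y].

Definition is_dist (T : finType) (e : rel T) (x y : T) (k : nat) : Prop :=
  walk_of_len e x y k /\ forall j, j < k -> ~ walk_of_len e x y j.

Inductive sym := S0 | Sa | Sb.

Definition ab_pair (s1 s2 : sym) : bool :=
  match s1, s2 with
  | Sa, Sb | Sb, Sa => true
  | _, _ => false
  end.

Definition addr_dist (t : nat) (u v : 'I_t -> sym) : nat :=
  \sum_(i < t) ab_pair (u i) (v i).

Definition addressing (T : finType) (e : rel T) (t : nat) (f : T -> 'I_t -> sym) : Prop :=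
  forall u v : T, is_dist e u v (addr_dist (f u) (f v)).

(* Triangular graph T_n: vertices are the 2-subsets of {1..n} (here 'I_n),
   adjacent iff distinct and intersecting (line graph of K_n). *)
Definition tri_vertex (n : nat) := {A : {set 'I_n} | #|A| == 2}.

Definition tri_adj (n : nat) : rel (tri_vertex n) :=
  fun A B => (A != B) && (val A :&: val B != set0).

(* Main.v *)
Require Import Defs.
From mathcomp Require Import all_boot all_order all_algebra.
From mathcomp Require Import ring.
Set Implicit Arguments. Unset Strict Implicit. Unset Printing Implicit Defensive.
Import Order.TTheory GRing.Theory Num.Theory.

Lemma is_dist_uniq (T : finType) (e : rel T) x y k k' :
  is_dist e x y k -> is_dist e x y k' -> k = k'.
Proof.
move=> [w1 h1] [w2 h2]; case: (ltngtP k k') => // H.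
- by case: (h2 _ H w1).
- by case: (h1 _ H w2).
Qed.

Lemma tv_card n (u : tri_vertex n) : #|val u| = 2.
Proof. exact/eqP/(valP u). Qed.

Lemma tv_eq n (u v : tri_vertex n) : #|val u :&: val v| = 2 -> u = v.
Proof.
move=> H; apply: val_inj.
have Hu : val u :&: val v = val u.
  by apply/eqP; rewrite eqEcard subsetIl H tv_card leqnn.
have Hv : val u :&: val v = val v.
  by apply/eqP; rewrite eqEcard subsetIr H tv_card leqnn.
by rewrite -Hu Hv.
Qed.

Lemma tri_dist m (u v : tri_vertex m.+4) :
  is_dist (@tri_adj _) u v (2 - #|val u :&: val v|).
Proof.
have Hle : #|val u :&: val v| <= 2 by have := subset_leq_card (subsetIl (val u) (val v)); rewrite tv_card.
case: (eqVneq u v) => [<-|neq].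
  rewrite setIid tv_card subnn; split; first by exists [::].
  by [].
case: (set_0Vmem (val u :&: val v)) => [H0|[a Ha]].
- rewrite H0 cards0 subn0.
  have [a ua] : exists a, a \in val u by apply/card_gt0P; rewrite tv_card.
  have [c vc] : exists c, c \in val v by apply/card_gt0P; rewrite tv_card.
  have nac : a != c.
    apply/eqP => E; move: H0 => /setP /(_ a); rewrite !inE ua E vc.
    by [].
  have pw : #|[set a; c]| == 2 by rewrite cards2 nac.
  pose w : tri_vertex m.+4 := exist _ [set a; c] pw.
  split.
  + exists [:: w; v]; split => //=; rewrite andbT; apply/andP; split.
    * rewrite /tri_adj; apply/andP; split.
        apply/eqP => E; move: H0 => /setP /(_ c); rewrite !inE vc E /= !inE eqxx orbT.
        by [].
      by apply/set0Pn; exists a; rewrite !inE ua eqxx.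
    * rewrite /tri_adj; apply/andP; split.
        apply/eqP => E; move: H0 => /setP /(_ a); rewrite !inE ua -E /= !inE eqxx.
        by [].
      by apply/set0Pn; exists c; rewrite !inE vc eqxx orbT.
  + move=> j hj [p [sz pth lst]].
    case: p sz pth lst => [|x [|y p]] //= sz.
    * by move=> _ E; rewrite E eqxx in neq.
    * rewrite andbT => adj E; move: adj; rewrite E /tri_adj H0 eqxx andbF.
      by [].
    * by rewrite -sz in hj.
- have H1 : #|val u :&: val v| = 1.
    have : #|val u :&: val v| != 0 by apply/eqP => /eqP; rewrite cards_eq0 => /eqP E; rewrite E inE in Ha.
    have : #|val u :&: val v| != 2 by apply/eqP => /tv_eq E; rewrite E eqxx in neq.
    by case: (#|val u :&: val v|) Hle => [|[|[|]]].
  rewrite H1; split.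
  + exists [:: v]; split => //=; rewrite andbT /tri_adj neq /=.
    by apply/set0Pn; exists a.
  + move=> j hj [p [sz pth lst]].
    case: p sz pth lst => [|x p] //= sz; last by rewrite -sz in hj.
    by move=> _ E; rewrite E eqxx in neq.
Qed.

Lemma adr_eq m t (f : tri_vertex m.+4 -> 'I_t -> sym) (H : addressing (@tri_adj _) f) u v :
  addr_dist (f u) (f v) = 2 - #|val u :&: val v|.
Proof. exact: is_dist_uniq (H u v) (tri_dist u v). Qed.
Local Open Scope ring_scope.

Definition lf m (w z : tri_vertex m.+4 -> rat) : rat := \sum_u w u * z u.

Lemma lfD m w (p q : tri_vertex m.+4 -> rat) : lf w (fun u => p u + q u) = lf w p + lf w q.
Proof. by rewrite /lf -big_split; apply eq_bigr => u _; rewrite mulrDr. Qed.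
Lemma lfB m w (p q : tri_vertex m.+4 -> rat) : lf w (fun u => p u - q u) = lf w p - lf w q.
Proof. by rewrite /lf -sumrB; apply eq_bigr => u _; rewrite mulrBr. Qed.
Lemma lf_e m w (v : tri_vertex m.+4) : lf w (fun u => (u == v)%:R) = w v.
Proof.
rewrite /lf (bigD1 v) //= eqxx mulr1 big1 ?addr0 // => u /negbTE ->; by rewrite mulr0.
Qed.
Lemma lf_comb m K w (c0 : tri_vertex m.+4 -> rat) (F : 'I_K -> tri_vertex m.+4 -> rat) a0 (a : 'I_K -> rat) :
  lf w (fun u => a0 * c0 u + \sum_k a k * F k u) = a0 * lf w c0 + \sum_k a k * lf w (F k).
Proof.
rewrite /lf; under eq_bigr do rewrite mulrDr mulr_sumr.
rewrite big_split /= mulr_sumr exchange_big /=; congr (_ + _).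
  by apply eq_bigr => u _; rewrite mulrCA.
by apply eq_bigr => k _; rewrite mulr_sumr; apply eq_bigr => u _; rewrite mulrCA.
Qed.

Definition chi m (u : tri_vertex m.+4) (j : 'I_m.+4) : rat := (j \in val u)%:R.
Definition s m (j : 'I_m.+4) := lf (fun u => chi u j).

Lemma v0_pf m : #|[set (ord0 : 'I_m.+4); inord 1]| == 2.
Proof. have H : (ord0 : 'I_m.+4) != inord 1 by rewrite -(inj_eq val_inj) /= inordK. by rewrite cards2 H. Qed.
Definition v0 m : tri_vertex m.+4 := exist (fun A : {set 'I_m.+4} => #|A| == 2) _ (v0_pf m).
Definition vx m (a b : 'I_m.+4) : tri_vertex m.+4 := insubd (v0 m) [set a; b].
Lemma val_vx m (a b : 'I_m.+4) : a != b -> val (vx a b) = [set a; b].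
Proof. by move=> H; rewrite /vx insubdK // unfold_in cards2 H. Qed.
Lemma chi_vx m (a b j : 'I_m.+4) : a != b -> chi (vx a b) j = ((j == a) || (j == b) : nat)%:R.
Proof. by move=> H; rewrite /chi val_vx // !inE. Qed.

Definition o m k : 'I_m.+4 := inord k.
Lemma eq_o m (j : 'I_m.+4) k : (k < m.+4)%N -> (j == o m k) = (val j == k).
Proof. by move=> hk; rewrite -(inj_eq val_inj) /= inordK. Qed.

Definition ev m (v : tri_vertex m.+4) u : rat := (u == v)%:R.
Definition cyc1 m u := ev (vx (o m 0) (o m 1)) u + ev (vx (o m 2) (o m 3)) u - (ev (vx (o m 1) (o m 3)) u + ev (vx (o m 0) (o m 2)) u).
Definition cyc2 m u := ev (vx (o m 0) (o m 2)) u + ev (vx (o m 1) (o m 3)) u - (ev (vx (o m 1) (o m 2)) u + ev (vx (o m 0) (o m 3)) u).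

Lemma o_neq m a b : (a < m.+4)%N -> (b < m.+4)%N -> a != b -> o m a != o m b.
Proof. by move=> ha hb hab; rewrite -(inj_eq val_inj) /= !inordK. Qed.

Lemma lf_cyc1 m w : lf w (@cyc1 m) = w (vx (o m 0) (o m 1)) + w (vx (o m 2) (o m 3)) - (w (vx (o m 1) (o m 3)) + w (vx (o m 0) (o m 2))).
Proof. by rewrite /cyc1 lfB !lfD !lf_e. Qed.
Lemma lf_cyc2 m w : lf w (@cyc2 m) = w (vx (o m 0) (o m 2)) + w (vx (o m 1) (o m 3)) - (w (vx (o m 1) (o m 2)) + w (vx (o m 0) (o m 3))).
Proof. by rewrite /cyc2 lfB !lfD !lf_e. Qed.

Lemma s_cyc1 m j : s j (@cyc1 m) = 0.
Proof.
rewrite /s lf_cyc1 !chi_vx ?o_neq // !eq_o // -!natrD.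
by case: j => [[|[|[|[|j]]]] Hj] /=; rewrite subrr.
Qed.
Lemma s_cyc2 m j : s j (@cyc2 m) = 0.
Proof.
rewrite /s lf_cyc2 !chi_vx ?o_neq // !eq_o // -!natrD.
by case: j => [[|[|[|[|j]]]] Hj] /=; rewrite subrr.
Qed.

Definition ak m (k : 'I_m.+4) := if val k == 0%N then o m 1 else o m 0.
Definition bk m (k : 'I_m.+4) := if val k == 2%N then o m 3 else o m 2.
Definition bvec m (k : 'I_m.+4) u :=
  ev (vx k (ak k)) u + ev (vx k (bk k)) u - ev (vx (ak k) (bk k)) u.

Lemma abk_neq m (k : 'I_m.+4) : [/\ k != ak k, k != bk k & ak k != bk k].
Proof.
rewrite /ak /bk /o.
case: k => [[|[|[|[|k]]]] Hk] /=; rewrite -!(inj_eq val_inj) /= !inordK //.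
Qed.

Lemma s_bvec m (j k : 'I_m.+4) : s j (bvec k) = (2 * (j == k))%:R.
Proof.
have [h1 h2 h3] := abk_neq k.
rewrite /s /bvec lfB !lfD !lf_e !chi_vx // -natrD.
case: (eqVneq j k) => [->|njk].
  by rewrite (negbTE h1) (negbTE h2) /= subr0.
rewrite /= !muln0.
case E1: (j == ak k); case E2: (j == bk k) => /=; try by rewrite subrr.
by move: h3; rewrite -(eqP E1) -(eqP E2) eqxx.
Qed.

Lemma ker_exists p q (A : 'M[rat]_(p, q)) : (q < p)%N -> exists2 x : 'rV_p, x != 0 & x *m A = 0.
Proof.
move=> hqp.
have hr : (0 < \rank (kermx A))%N by rewrite mxrank_ker subn_gt0 (leq_ltn_trans (rank_leq_col A)).
have nz : kermx A != 0 by rewrite -mxrank_eq0 -lt0n.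
case: (pickP (fun i => row i (kermx A) != 0)) => [i Hi|H].
  exists (row i (kermx A)) => //.
  by rewrite -row_mul mulmx_ker row0.
have : kermx A = 0.
  apply/row_matrixP => i; rewrite row0; apply/eqP.
  by move/negbFE: (H i).
by move/eqP: nz.
Qed.

Definition seqb (a b : sym) : bool :=
  match a, b with S0, S0 | Sa, Sa | Sb, Sb => true | _, _ => false end.
Definition wsym m t (f : tri_vertex m.+4 -> 'I_t -> sym) (sg : sym) (i : 'I_t) u : rat := (seqb (f u i) sg)%:R.

Definition Q m t (f : tri_vertex m.+4 -> 'I_t -> sym) (z : tri_vertex m.+4 -> rat) :=
  \sum_u \sum_v z u * z v * (addr_dist (f u) (f v))%:R.

Lemma Q1i m t (f : tri_vertex m.+4 -> 'I_t -> sym) z i :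
  lf (wsym f Sa i) z * lf (wsym f Sb i) z + lf (wsym f Sb i) z * lf (wsym f Sa i) z
  = \sum_u \sum_v z u * z v * (ab_pair (f u i) (f v i))%:R.
Proof.
rewrite /lf !mulr_suml -big_split; apply eq_bigr => u _.
rewrite !mulr_sumr -big_split; apply eq_bigr => v _.
rewrite /wsym; case: (f u i); case: (f v i) => /=; ring.
Qed.

Lemma Q1 m t f z : @Q m t f z = \sum_i (lf (wsym f Sa i) z * lf (wsym f Sb i) z + lf (wsym f Sb i) z * lf (wsym f Sa i) z).
Proof.
transitivity (\sum_i \sum_u \sum_v z u * z v * (ab_pair (f u i) (f v i))%:R); last first.
  by apply eq_bigr => i _; rewrite Q1i.
rewrite /Q.
under eq_bigr do under eq_bigr do rewrite /addr_dist natr_sum mulr_sumr.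
under eq_bigr do rewrite exchange_big.
by rewrite exchange_big.
Qed.

Lemma card_inter n (A B : {set 'I_n}) : (#|A :&: B|)%:R = \sum_j (j \in A)%:R * (j \in B)%:R :> rat.
Proof.
rewrite -sum1_card natr_sum big_mkcond; apply eq_bigr => j _.
by rewrite inE; case: (j \in A); case: (j \in B); rewrite /= ?mulr0 ?mul0r ?mulr1.
Qed.

Lemma Q2 m t f z : addressing (@tri_adj _) f -> \sum_u z u = 0 ->
  @Q m t f z = - \sum_j (s j z) ^+ 2.
Proof.
move=> Hf Hz; rewrite /Q.
have E : forall u v : tri_vertex m.+4, (addr_dist (f u) (f v))%:R = 2 - \sum_j chi u j * chi v j :> rat.
  move=> u v; rewrite adr_eq // natrB ?card_inter //.
  by have := subset_leq_card (subsetIl (val u) (val v)); rewrite tv_card.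
under eq_bigr do under eq_bigr do rewrite E.
transitivity (\sum_u \sum_v (z u * z v * 2) - \sum_u \sum_v \sum_j ((chi u j * z u) * (chi v j * z v))).
  rewrite -sumrB; apply eq_bigr => u _; rewrite -sumrB; apply eq_bigr => v _.
  rewrite mulrBr mulr_sumr; congr (_ - _); apply eq_bigr => j _; ring.
have E0 : \sum_u \sum_v (z u * z v * 2) = 0.
  rewrite (eq_bigr (fun u => z u * ((\sum_v z v) * 2))); last first.
    by move=> u _; rewrite mulr_suml mulr_sumr; apply eq_bigr => v _; rewrite mulrA.
  by rewrite Hz mul0r big1 // => u _; rewrite mulr0.
rewrite E0 sub0r; congr (- _).
under eq_bigr do rewrite exchange_big.
rewrite exchange_big; apply eq_bigr => j _.
rewrite expr2 /s /lf mulr_suml; apply eq_bigr => u _.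
by rewrite mulr_sumr.
Qed.

Lemma key m t (f : tri_vertex m.+4 -> 'I_t -> sym) (cyc : tri_vertex m.+4 -> rat)
  (Hf : addressing (@tri_adj _) f) (ht : (t < m.+4)%N)
  (Hcyc : forall j, s j cyc = 0) (sg : sym) (Hsg : sg = Sa \/ sg = Sb) (i : 'I_t) :
  lf (wsym f sg i) cyc = 0.
Proof.
pose zb (k : 'I_(m.+4).+1) := if unlift ord0 k is Some k' then bvec k' else cyc.
pose W (r : 'I_t.+1) := if unlift ord0 r is Some i' then wsym f sg i' else (fun _ => 1 : rat).
pose A : 'M[rat]_((m.+4).+1, t.+1) := \matrix_(k, r) lf (W r) (zb k).
have [x xnz xA] := ker_exists A ht.
pose z u := x 0 ord0 * cyc u + \sum_(k < m.+4) x 0 (lift ord0 k) * bvec k u.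
have Hz : forall r, lf (W r) z = 0.
  move=> r; rewrite /z lf_comb.
  have := congr1 (fun M : 'M[rat]_(1, t.+1) => M 0 r) xA; rewrite /A !mxE big_ord_recl /= => E; rewrite -[X in _ = X]E.
  congr (_ + _); first by rewrite mxE /zb unlift_none.
  by apply eq_bigr => k _; rewrite mxE /zb liftK.
have Hsum : \sum_u z u = 0.
  by have := Hz ord0; rewrite /W unlift_none /lf; under eq_bigr do rewrite mul1r.
have HzS : forall i', lf (wsym f sg i') z = 0.
  by move=> i'; have := Hz (lift ord0 i'); rewrite /W liftK.
have Q0 : Q f z = 0.
  rewrite Q1 big1 // => i' _; case: Hsg => E; rewrite -E HzS ?mul0r ?mulr0 addr0 //.
have Hs : forall j, s j z = 0.
  move: Q0; rewrite (Q2 Hf Hsum) => /eqP; rewrite oppr_eq0 => /eqP H j.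
  have := @psumr_eq0P _ _ predT (fun j => s j z ^+ 2) (fun j _ => sqr_ge0 (s j z)) H j isT.
  by move/eqP; rewrite sqrf_eq0 => /eqP.
have sb := s_bvec; rewrite /s in sb Hcyc.
have Hy : forall k, x 0 (lift ord0 k) = 0.
  move=> k; have := Hs k; rewrite /s lf_comb Hcyc mulr0 add0r.
  rewrite (bigD1 k) //= sb eqxx big1 ?addr0 => [/eqP|k' nk]; last first.
    by rewrite sb eq_sym (negbTE nk) muln0 mulr0.
  by rewrite mulf_eq0 pnatr_eq0 /= orbF => /eqP.
have x0nz : x 0 ord0 != 0.
  apply: contraNneq xnz => E; apply/eqP/rowP => k; rewrite mxE.
  by case: (unliftP ord0 k) => [k' ->|->]; [exact: Hy | exact: E].
have := HzS i; rewrite /z lf_comb big1 ?addr0 => [/eqP|k _]; last by rewrite Hy mul0r.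
by rewrite mulf_eq0 (negbTE x0nz) /= => /eqP.
Qed.
Local Close Scope ring_scope.

Definition rels (x01 x02 x03 x12 x13 x23 sg : sym) : bool :=
  ((seqb x01 sg + seqb x23 sg == seqb x13 sg + seqb x02 sg)%N &&
   (seqb x02 sg + seqb x13 sg == seqb x12 sg + seqb x03 sg)%N).

Lemma comb (x01 x02 x03 x12 x13 x23 : sym) :
  rels x01 x02 x03 x12 x13 x23 Sa -> rels x01 x02 x03 x12 x13 x23 Sb ->
  ~~ odd (ab_pair x03 x13 + ab_pair x03 x23 + ab_pair x13 x23).
Proof.
by case: x01; case: x02; case: x03; case: x12; case: x13; case: x23.
Qed.

Lemma adj_dist (T : finType) (e : rel T) x y : x != y -> e x y -> is_dist e x y 1.
Proof.
move=> nxy exy; split; first by exists [:: y]; split => //=; rewrite exy.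
move=> j hj [p [sz pth lst]]; case: p sz pth lst => [|a p] //= sz; last by rewrite -sz in hj.
by move=> _ E; rewrite E eqxx in nxy.
Qed.

Lemma adj_vx m a b c : (a < m.+4)%N -> (b < m.+4)%N -> (c < m.+4)%N ->
  a != b -> a != c -> b != c ->
  let u := vx (o m a) (o m c) in let v := vx (o m b) (o m c) in
  u != v /\ tri_adj u v.
Proof.
move=> ha hb hc ab ac bc u v.
have hac := o_neq ha hc ac; have hbc := o_neq hb hc bc.
have nuv : u != v.
  apply/eqP => E; have := f_equal val E; rewrite /u /v !val_vx // => /setP /(_ (o m a)).
  by rewrite !inE eqxx /= !eq_o // /o /= inordK // (negbTE ab) (negbTE ac).
split => //; rewrite /tri_adj nuv /=.
by apply/set0Pn; exists (o m c); rewrite /u /v !val_vx // !inE !eqxx !orbT.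
Qed.

Theorem theorem17 (n : nat) (hn : 4 <= n) (t : nat) (f : tri_vertex n -> 'I_t -> sym) :
  addressing (@tri_adj n) f -> n <= t.
Proof.
case: n hn f => [|[|[|[|m]]]] // _ f Hf.
rewrite leqNgt; apply/negP => ht.
have R : forall i sg, sg = Sa \/ sg = Sb -> rels (f (vx (o m 0) (o m 1)) i) (f (vx (o m 0) (o m 2)) i) (f (vx (o m 0) (o m 3)) i) (f (vx (o m 1) (o m 2)) i) (f (vx (o m 1) (o m 3)) i) (f (vx (o m 2) (o m 3)) i) sg.
  move=> i sg Hsg; rewrite /rels.
  have h1 := key Hf ht (@s_cyc1 m) Hsg i.
  have h2 := key Hf ht (@s_cyc2 m) Hsg i.
  rewrite lf_cyc1 /wsym in h1; rewrite lf_cyc2 /wsym in h2.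
  move/eqP: h1; rewrite GRing.subr_eq0 -!GRing.natrD eqr_nat => ->.
  by move/eqP: h2; rewrite GRing.subr_eq0 -!GRing.natrD eqr_nat => ->.
have [n1 a1] := @adj_vx m 0 1 3 isT isT isT isT isT isT.
have [n2 a2] := @adj_vx m 0 2 3 isT isT isT isT isT isT.
have [n3 a3] := @adj_vx m 1 2 3 isT isT isT isT isT isT.
have d1 := is_dist_uniq (Hf _ _) (adj_dist n1 a1).
have d2 := is_dist_uniq (Hf _ _) (adj_dist n2 a2).
have d3 := is_dist_uniq (Hf _ _) (adj_dist n3 a3).
have : ~~ odd (addr_dist (f (vx (o m 0) (o m 3))) (f (vx (o m 1) (o m 3)))
             + addr_dist (f (vx (o m 0) (o m 3))) (f (vx (o m 2) (o m 3)))
             + addr_dist (f (vx (o m 1) (o m 3))) (f (vx (o m 2) (o m 3)))).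
  rewrite /addr_dist -!big_split /=.
  apply: (big_ind (fun x => ~~ odd x)) => //; first by move=> a b; rewrite oddD => /negbTE -> /negbTE ->.
  by move=> i _; apply: comb; apply: R; [left|right].
by rewrite d1 d2 d3.
Qed.
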